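(* Let $F$ be a field, let $A_n$ be a Cayley--Dickson algebra over $F$ and $A_{n+1}=A_n\{\gamma_n\}$ for some $\gamma_n\in F^\times$. Let $a,b\in A_n$ be alternative elements of $A_n$, and assume that either $a\in F$, or $b\in F$, or $F+Fa=F+Fb$. Then $(a,b)$ is an alternative element of $A_{n+1}$.
   Context: For an $F$-algebra $B$ with involution $a\mapsto\bar a$ and $\gamma\in F^\times$, the Cayley--Dickson double $B\{\gamma\}$ is $B\times B$ with componentwise addition and scalar multiplication, product $(a,b)(c,d)=(ac+\gamma\bar d b,\ da+b\bar c)$ and involution $\overline{(a,b)}=(\bar a,-b)$. Cayley--Dickson algebras over $F$: $A_1=F[\ell_1:\ell_1^2=\ell_1+\mu]=F+F\ell_1$ with $\mu\in F$, $4\mu+1\neq 0$, and involution $\overline{\alpha+\beta\ell_1}=(\alpha+\beta)-\beta\ell_1$; then $A_{k+1}=A_k\{\gamma_k\}$ with $\gamma_k\in F^\times$. ($F$ is identified with $F\cdot 1$.) An element $a$ of an algebra $A$ is alternative if $a(ab)=a^2b$ and $(ba)a=ba^2$ for all $b\in A$. *)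

(* Defs.v *)
From HB Require Import structures.
From mathcomp Require Import all_boot all_algebra.
Set Implicit Arguments. Unset Strict Implicit. Unset Printing Implicit Defensive.
Import GRing.Theory.
Local Open Scope ring_scope.

(* Indexing: [cdT F m] is the carrier of A_(m+1); so cdT F 0 = A_1 = F + F l_1
   (pairs (alpha, beta) meaning alpha + beta l_1), and
   cdT F m.+1 = cdT F m * cdT F m is the Cayley--Dickson double of A_(m+1),
   using the parameter [gam m]. *)
Section CD.
Variable F : fieldType.
Variable mu : F.
Variable gam : nat -> F.

Fixpoint cdT (m : nat) : Type :=
  match m with 0 => (F * F)%type | k.+1 => (cdT k * cdT k)%type end.

Fixpoint cd_add (m : nat) : cdT m -> cdT m -> cdT m :=
  match m return cdT m -> cdT m -> cdT m with
  | 0 => fun x y => (x.1 + y.1, x.2 + y.2)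
  | k.+1 => fun x y => (cd_add x.1 y.1, cd_add x.2 y.2)
  end.

Fixpoint cd_scale (m : nat) (c : F) : cdT m -> cdT m :=
  match m return cdT m -> cdT m with
  | 0 => fun x => (c * x.1, c * x.2)
  | k.+1 => fun x => (cd_scale c x.1, cd_scale c x.2)
  end.

Fixpoint cd_emb (m : nat) (c : F) : cdT m :=
  match m return cdT m with
  | 0 => (c, 0)
  | k.+1 => (cd_emb k c, cd_emb k 0)
  end.

Fixpoint cd_conj (m : nat) : cdT m -> cdT m :=
  match m return cdT m -> cdT m with
  | 0 => fun x => (x.1 + x.2, - x.2)
  | k.+1 => fun x => (cd_conj x.1, cd_scale (-1) x.2)
  end.

(* (a,b)(c,d) = (ac + gamma * dbar b, da + b cbar) ;
   on A_1: (al + be l)(al' + be' l) with l^2 = l + mu. *)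
Fixpoint cd_mul (m : nat) : cdT m -> cdT m -> cdT m :=
  match m return cdT m -> cdT m -> cdT m with
  | 0 => fun x y => (x.1 * y.1 + mu * (x.2 * y.2),
                     x.1 * y.2 + x.2 * y.1 + x.2 * y.2)
  | k.+1 => fun x y =>
      (cd_add (cd_mul x.1 y.1) (cd_scale (gam k) (cd_mul (cd_conj y.2) x.2)),
       cd_add (cd_mul y.2 x.1) (cd_mul x.2 (cd_conj y.1)))
  end.

Definition cd_alternative (m : nat) (a : cdT m) : Prop :=
  forall b : cdT m,
    cd_mul a (cd_mul a b) = cd_mul (cd_mul a a) b /\
    cd_mul (cd_mul b a) a = cd_mul b (cd_mul a a).

Definition cd_inF (m : nat) (a : cdT m) : Prop := exists c : F, a = cd_emb m c.

Definition cd_span1 (m : nat) (a x : cdT m) : Prop :=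
  exists al be : F, x = cd_add (cd_emb m al) (cd_scale be a).

End CD.

(* Main.v *)
From HB Require Import structures.
Require Import Defs.
From mathcomp Require Import all_boot all_algebra.
From mathcomp Require Import boolp.
From mathcomp Require Import ring.
Set Implicit Arguments. Unset Strict Implicit. Unset Printing Implicit Defensive.
Import GRing.Theory.
Local Open Scope ring_scope.

Section VS.
Variable F : fieldType.

Lemma cd_addA m (x y z : cdT F m) : cd_add x (cd_add y z) = cd_add (cd_add x y) z.
Proof. elim: m x y z => [|k IH] [x1 x2] [y1 y2] [z1 z2] /=; last by rewrite !IH.
by rewrite !addrA. Qed.
Lemma cd_addC m (x y : cdT F m) : cd_add x y = cd_add y x.
Proof. elim: m x y => [|k IH] [x1 x2] [y1 y2] /=; last by rewrite IH (IH x2).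
by rewrite addrC (addrC x2). Qed.
Lemma cd_add0 m (x : cdT F m) : cd_add (cd_emb m 0) x = x.
Proof. elim: m x => [|k IH] [x1 x2] /=; last by rewrite !IH.
by rewrite !add0r. Qed.
Lemma cd_addN m (x : cdT F m) : cd_add (cd_scale (-1) x) x = cd_emb m 0.
Proof. elim: m x => [|k IH] [x1 x2] /=; last by rewrite !IH.
by congr pair; ring. Qed.
Lemma cd_scaleA m a b (x : cdT F m) : cd_scale a (cd_scale b x) = cd_scale (a*b) x.
Proof. elim: m x => [|k IH] [x1 x2] /=; last by rewrite !IH.
by rewrite !mulrA. Qed.
Lemma cd_scale1 m (x : cdT F m) : cd_scale 1 x = x.
Proof. elim: m x => [|k IH] [x1 x2] /=; last by rewrite !IH.
by rewrite !mul1r. Qed.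
Lemma cd_scaleDr m a (x y : cdT F m) : cd_scale a (cd_add x y) = cd_add (cd_scale a x) (cd_scale a y).
Proof. elim: m x y => [|k IH] [x1 x2] [y1 y2] /=; last by rewrite !IH.
by rewrite !mulrDr. Qed.
Lemma cd_scaleDl m a b (x : cdT F m) : cd_scale (a+b) x = cd_add (cd_scale a x) (cd_scale b x).
Proof. elim: m x => [|k IH] [x1 x2] /=; last by rewrite !IH.
by rewrite !mulrDl. Qed.
End VS.

Definition V (F : fieldType) m := cdT F m.
HB.instance Definition _ F m := gen_eqMixin (V F m).
HB.instance Definition _ F m := gen_choiceMixin (V F m).
HB.instance Definition _ (F : fieldType) m := GRing.isZmodule.Build (V F m)
  (@cd_addA F m) (@cd_addC F m) (@cd_add0 F m) (@cd_addN F m).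
HB.instance Definition _ (F : fieldType) m := GRing.Zmodule_isLmodule.Build F (V F m)
  (@cd_scaleA F m) (@cd_scale1 F m) (@cd_scaleDr F m) (fun x a b => @cd_scaleDl F m a b x).

Section Refl.
Variables (F : fieldType) (W : lmodType F).
Definition psi (s : seq W) (p : {poly F}) : W := \sum_(i < size s) p`_i.+1 *: s`_i.
Lemma psiD s p q : psi s (p + q) = psi s p + psi s q.
Proof. by rewrite /psi -big_split; apply: eq_bigr => i _; rewrite coefD scalerDl. Qed.
Lemma psiZ s c p : psi s (c *: p) = c *: psi s p.
Proof. by rewrite /psi scaler_sumr; apply: eq_bigr => i _; rewrite coefZ scalerA. Qed.
Lemma psiN s p : psi s (- p) = - psi s p.
Proof. by rewrite /psi -sumrN; apply: eq_bigr => i _; rewrite coefN scaleNr. Qed.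
Lemma psiX s i : psi s 'X^(i.+1) = nth 0 s i.
Proof.
rewrite /psi; case: (ltnP i (size s)) => hi.
  rewrite (bigD1 (Ordinal hi)) //= coefXn eqxx scale1r big1 ?addr0 // => j hj.
  rewrite coefXn eqSS; case: eqP => [hji|]; last by rewrite scale0r.
  by case/eqP: hj; apply: val_inj.
rewrite nth_default // big1 // => j _; rewrite coefXn eqSS; case: eqP => [hji|].
  by move: (ltn_ord j); rewrite hji ltnNge hi.
by rewrite scale0r.
Qed.
Lemma psiX' s i x : nth 0 s i = x -> x = psi s 'X^(i.+1).
Proof. by rewrite psiX => ->. Qed.
Lemma lin_hyp (L R L1 R1 : W) (k : F) : L1 = R1 -> L - R = k *: (L1 - R1) -> L = R.
Proof. by move=> -> ; rewrite subrr scaler0 => /eqP; rewrite subr_eq0 => /eqP. Qed.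
Lemma lin_hyp2 (L R L1 R1 L2 R2 : W) (k1 k2 : F) : L1 = R1 -> L2 = R2 ->
  L - R = k1 *: (L1 - R1) + k2 *: (L2 - R2) -> L = R.
Proof. by move=> -> ->; rewrite !subrr !scaler0 addr0 => /eqP; rewrite subr_eq0 => /eqP. Qed.
End Refl.

Ltac psi_atoms s :=
  let l := eval cbv delta [s] in s in
  let rec go l i := lazymatch l with
   | nil => idtac
   | cons ?x ?l' => rewrite (@psiX' _ _ s i x erefl); go l' constr:(S i)
  end in go l 0%nat.
Ltac psi_fold := repeat (first [rewrite -psiZ | rewrite -psiN | rewrite -psiD]).
Ltac psi_solve s := psi_atoms s; psi_fold; congr (psi s _); rewrite -?mul_polyC; ring.



Section Alg.
Variables (F : fieldType) (mu : F) (gam : nat -> F).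
Definition mul m (x y : V F m) : V F m := cd_mul mu gam x y.
Definition cj m (x : V F m) : V F m := cd_conj x.
Definition e m (c : F) : V F m := cd_emb m c.
Local Notation "x ** y" := (mul x y) (at level 40, left associativity).

Lemma addE m (x y : V F m) : cd_add x y = x + y. Proof. by []. Qed.
Lemma scaleE m c (x : V F m) : cd_scale c x = c *: x. Proof. by []. Qed.
Lemma zeroE m : (cd_emb m (0:F) : V F m) = 0. Proof. by []. Qed.
Lemma mulE m (x y : V F m) : cd_mul mu gam x y = x ** y. Proof. by []. Qed.
Lemma cjE m (x : V F m) : cd_conj x = cj x. Proof. by []. Qed.
Lemma eE m c : cd_emb m c = e m c. Proof. by []. Qed.
Definition cdE := (addE, scaleE, zeroE, mulE, cjE, eE).

Lemma e0 m : e m 0 = 0. Proof. by []. Qed.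

Ltac unf := rewrite /mul /cj /e -?addE -?scaleE /= ?cdE.

Lemma cjD m (x y : V F m) : cj (x + y) = cj x + cj y.
Proof.
elim: m x y => [|k IH] [x1 x2] [y1 y2]; unf; first by congr pair; ring.
by rewrite IH scalerDr.
Qed.
Lemma cjZ m c (x : V F m) : cj (c *: x) = c *: cj x.
Proof.
elim: m x => [|k IH] [x1 x2]; unf; first by congr pair; ring.
by rewrite IH !scalerA mulrC.
Qed.
Lemma cjK m (x : V F m) : cj (cj x) = x.
Proof.
elim: m x => [|k IH] [x1 x2]; unf; first by congr pair; ring.
by rewrite IH scalerA mulrNN mulr1 scale1r.
Qed.
Lemma eD m c d : e m (c + d) = e m c + e m d.
Proof.
elim: m => [|k IH]; unf; first by congr pair; ring.
by rewrite IH addr0.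
Qed.
Lemma eZ m c d : c *: e m d = e m (c * d).
Proof.
elim: m => [|k IH]; unf; first by congr pair; ring.
by rewrite IH scaler0.
Qed.
Lemma cj_e m c : cj (e m c) = e m c.
Proof.
elim: m => [|k IH]; unf; first by congr pair; ring.
by rewrite IH scaler0.
Qed.
Lemma cj0 m : cj (0 : V F m) = 0.
Proof. by rewrite -(e0 m) cj_e. Qed.
Lemma cjN m (x : V F m) : cj (- x) = - cj x.
Proof. by rewrite -!scaleN1r cjZ. Qed.
Lemma cjB m (x y : V F m) : cj (x - y) = cj x - cj y.
Proof. by rewrite cjD cjN. Qed.

Lemma mulD m : (forall x y z : V F m, (x + y) ** z = x ** z + y ** z) /\ (forall x y z : V F m, z ** (x + y) = z ** x + z ** y).
Proof.
elim: m => [|k [IHl IHr]]; split.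
- by move=> [x1 x2] [y1 y2] [z1 z2]; unf; congr pair; ring.
- by move=> [x1 x2] [y1 y2] [z1 z2]; unf; congr pair; ring.
- move=> [x1 x2] [y1 y2] [z1 z2]; unf.
  by rewrite !IHl !IHr scalerDr; congr pair; rewrite addrACA.
- move=> [x1 x2] [y1 y2] [z1 z2]; unf.
  by rewrite !cjD !IHl !IHr scalerDr; congr pair; rewrite addrACA.
Qed.
Lemma mulDl m (x y z : V F m) : (x + y) ** z = x ** z + y ** z.
Proof. exact: (mulD m).1. Qed.
Lemma mulDr m (x y z : V F m) : z ** (x + y) = z ** x + z ** y.
Proof. exact: (mulD m).2. Qed.

Lemma mulZ m : (forall c (x y : V F m), (c *: x) ** y = c *: (x ** y)) /\ (forall c (x y : V F m), x ** (c *: y) = c *: (x ** y)).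
Proof.
elim: m => [|k [IHl IHr]]; split.
- by move=> c [x1 x2] [y1 y2]; unf; congr pair; ring.
- by move=> c [x1 x2] [y1 y2]; unf; congr pair; ring.
- move=> c [x1 x2] [y1 y2]; unf.
  by rewrite !IHl !IHr !scalerDr !scalerA (mulrC c).
- move=> c [x1 x2] [y1 y2]; unf.
  by rewrite !cjZ !IHl !IHr !scalerDr !scalerA (mulrC c).
Qed.
Lemma mulZl m c (x y : V F m) : (c *: x) ** y = c *: (x ** y).
Proof. exact: (mulZ m).1. Qed.
Lemma mulZr m c (x y : V F m) : x ** (c *: y) = c *: (x ** y).
Proof. exact: (mulZ m).2. Qed.
Lemma mul0l m (x : V F m) : 0 ** x = 0.
Proof. by rewrite -(scale0r x) mulZl !scale0r. Qed.
Lemma mul0r m (x : V F m) : x ** 0 = 0.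
Proof. by rewrite -(scale0r x) mulZr !scale0r. Qed.
Lemma mulNl m (x y : V F m) : (- x) ** y = - (x ** y).
Proof. by rewrite -!scaleN1r mulZl. Qed.
Lemma mulNr m (x y : V F m) : x ** (- y) = - (x ** y).
Proof. by rewrite -!scaleN1r mulZr. Qed.
Lemma mulBl m (x y z : V F m) : (x - y) ** z = x ** z - y ** z.
Proof. by rewrite mulDl mulNl. Qed.
Lemma mulBr m (x y z : V F m) : z ** (x - y) = z ** x - z ** y.
Proof. by rewrite mulDr mulNr. Qed.

Lemma mul_e m : (forall c (x : V F m), e m c ** x = c *: x) /\ (forall c (x : V F m), x ** e m c = c *: x).
Proof.
elim: m => [|k [IHl IHr]]; split.
- by move=> c [x1 x2]; unf; congr pair; ring.
- by move=> c [x1 x2]; unf; congr pair; ring.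
- move=> c [x1 x2]; unf.
  by rewrite IHl IHr mul0r mul0l scaler0 !addr0.
- move=> c [x1 x2]; unf.
  by rewrite IHl cj_e cj0 mul0l scaler0 addr0 scale0r add0r !IHr.
Qed.
Lemma mul_el m c (x : V F m) : e m c ** x = c *: x.
Proof. exact: (mul_e m).1. Qed.
Lemma mul_er m c (x : V F m) : x ** e m c = c *: x.
Proof. exact: (mul_e m).2. Qed.

Lemma cj_mul m (x y : V F m) : cj (x ** y) = cj y ** cj x.
Proof.
elim: m x y => [|k IH] [x1 x2] [y1 y2]; unf; first by congr pair; ring.
rewrite cjD !cjZ !IH !cjK mulZl mulZr scalerA mulrNN mulr1 scale1r scalerDr; congr pair => //.
by rewrite !mulZl addrC.
Qed.

Fixpoint tr (m : nat) : cdT F m -> F :=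
  match m return cdT F m -> F with
  | 0 => fun x => x.1 + x.1 + x.2
  | k.+1 => fun x => tr x.1 end.
Fixpoint nr (m : nat) : cdT F m -> F :=
  match m return cdT F m -> F with
  | 0 => fun x => x.1 * (x.1 + x.2) - mu * (x.2 * x.2)
  | k.+1 => fun x => nr x.1 - gam k * nr x.2 end.

Lemma trE m (x : V F m) : x + cj x = e m (tr x).
Proof.
elim: m x => [|k IH] [x1 x2]; unf; first by congr pair; ring.
by rewrite IH scaleN1r subrr.
Qed.

Lemma nrE m : (forall x : V F m, x ** cj x = e m (nr x)) /\ (forall x : V F m, cj x ** x = e m (nr x)).
Proof.
elim: m => [|k [IH1 IH2]]; split.
- by move=> [x1 x2]; unf; congr pair; ring.
- by move=> [x1 x2]; unf; congr pair; ring.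
- move=> [x1 x2]; unf; rewrite !cjZ cjK !mulZl IH1 IH2.
  by rewrite !eZ -eD scaleN1r addNr; congr pair; congr (e k _); ring.
- move=> [x1 x2]; unf; rewrite mulZr mulZl !IH2; congr pair; last by rewrite scaleN1r addrN.
  by rewrite !eZ -eD; congr (e k _); ring.
Qed.
Lemma nrE1 m (x : V F m) : x ** cj x = e m (nr x). Proof. exact: (nrE m).1. Qed.
Lemma nrE2 m (x : V F m) : cj x ** x = e m (nr x). Proof. exact: (nrE m).2. Qed.

Section Lev.
Variable m : nat.
Implicit Types x y u v : V F m.

Lemma cjE' x : cj x = e m (tr x) - x.
Proof. by rewrite -trE [x + _]addrC addrK. Qed.

Lemma sqE x : x ** x = tr x *: x - e m (nr x).
Proof.
have h := nrE1 x; rewrite cjE' mulBr mul_er in h.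
by rewrite -h opprB addrC subrK.
Qed.

Lemma Nsym u v : u ** cj v + v ** cj u = cj u ** v + cj v ** u.
Proof.
rewrite !cjE' !mulBr !mulBl !mul_er !mul_el.
by rewrite addrACA [RHS]addrACA (addrC (tr v *: u)).
Qed.

Definition alt u := forall y, u ** (u ** y) = (u ** u) ** y /\ (y ** u) ** u = y ** (u ** u).

Lemma altL u (hu : alt u) y : cj u ** (u ** y) = nr u *: y.
Proof.
rewrite cjE' mulBl mul_el (hu y).1 sqE mulBl mulZl mul_el.
by rewrite opprB addrC subrK.
Qed.
Lemma altL' u (hu : alt u) y : u ** (cj u ** y) = nr u *: y.
Proof.
rewrite cjE' mulBl mul_el mulBr mulZr (hu y).1 sqE mulBl mulZl mul_el.
by rewrite opprB addrC subrK.
Qed.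
Lemma altR u (hu : alt u) y : (y ** cj u) ** u = nr u *: y.
Proof.
rewrite cjE' mulBr mul_er mulBl mulZl (hu y).2 sqE mulBr mulZr mul_er.
by rewrite opprB addrC subrK.
Qed.
Lemma eE1 c : e m c = c *: e m 1.
Proof. by rewrite eZ mulr1. Qed.

Ltac expand := rewrite ?(mulBr, mulBl, mulDr, mulDl, mulZr, mulZl, mul_er, mul_el, mulNr, mulNl).

Lemma flex u (hu : alt u) y : (u ** y) ** u = u ** (y ** u).
Proof.
have h1 := Nsym (u ** y) u.
rewrite cj_mul altL // altR // [cj u]cjE' [cj y]cjE' in h1.
rewrite ?(mulBr, mulBl, mulDr, mulDl, mulZr, mulZl, mul_er, mul_el, mulNr, mulNl) in h1.
rewrite sqE [e m (tr y)]eE1 [e m (nr u)]eE1 in h1.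
apply: (lin_hyp (k := -1) h1).
move: (u ** y ** u) => P; move: (u ** (y ** u)) => Q; move: (u ** y) => A; move: (e m 1) => E.
set s := [:: P; Q; A; E; u; y].
psi_solve s.
Qed.
End Lev.
End Alg.

Unset Implicit Arguments.
Theorem proposition2p2 (F : fieldType) (mu : F) (gam : nat -> F)
    (hmu : 4%:R * mu + 1 != 0) (hgam : forall k, gam k != 0)
    (m : nat) (a b : cdT F m)
    (ha : cd_alternative mu gam a) (hb : cd_alternative mu gam b)
    (hab : cd_inF a \/ cd_inF b \/
           (forall x : cdT F m, cd_span1 a x <-> cd_span1 b x)) :
  @cd_alternative F mu gam m.+1 (a, b).
Proof.
have ha' : alt mu gam (a : V F m) := ha.
have hb' : alt mu gam (b : V F m) := hb.
rewrite /cd_alternative => -[c d] /=.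
rewrite !(cdE mu gam).
have [h1 h2] : (forall y : V F m, mul mu gam a (mul mu gam y b) = mul mu gam (mul mu gam a y) b) /\
   (forall y : V F m, mul mu gam b (mul mu gam y a) = mul mu gam (mul mu gam b y) a).
  case: hab => [[c0 ->]|[[c0 ->]|hsp]].
  - by split=> y; rewrite eE; rewrite ?(mulBr, mulBl, mulDr, mulDl, mulZr, mulZl, mul_er, mul_el, mulNr, mulNl).
  - by split=> y; rewrite eE; rewrite ?(mulBr, mulBl, mulDr, mulDl, mulZr, mulZl, mul_er, mul_el, mulNr, mulNl).
  - have [al [be hb0]] : cd_span1 a b.
      by apply/hsp; exists 0, 1; rewrite addE scaleE zeroE add0r scale1r.
    by split=> y; rewrite hb0 !cdE; rewrite ?(mulBr, mulBl, mulDr, mulDl, mulZr, mulZl, mul_er, mul_el, mulNr, mulNl); rewrite flex.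
rewrite -(mulDr mu gam a (cj a) b) trE mul_er.
split; congr pair.
- rewrite cjD !cj_mul cjK.
  rewrite ?(mulBr, mulBl, mulDr, mulDl, mulZr, mulZl, mul_er, mul_el, mulNr, mulNl).
  rewrite (ha' c).1 nrE2 mul_el altR // h1 [cj a]cjE'.
  rewrite ?(mulBr, mulBl, mulDr, mulDl, mulZr, mulZl, mul_er, mul_el, mulNr, mulNl).
  move: (mul mu gam (mul mu gam a a) c) => P1.
  move: (mul mu gam (mul mu gam a (cj d)) b) => P2.
  move: (mul mu gam (cj d) b) => P3.
  set s := [:: P1; P2; P3; c : V F m].
  psi_solve s.
- rewrite cjD cjZ !cj_mul cjK.
  rewrite ?(mulBr, mulBl, mulDr, mulDl, mulZr, mulZl, mul_er, mul_el, mulNr, mulNl).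
  rewrite (ha' d).2 nrE2 mul_er altL' // [cj a]cjE'.
  rewrite ?(mulBr, mulBl, mulDr, mulDl, mulZr, mulZl, mul_er, mul_el, mulNr, mulNl).
  rewrite h2.
  move: (mul mu gam d (mul mu gam a a)) => P1.
  move: (mul mu gam (mul mu gam b (cj c)) a) => P2.
  move: (mul mu gam b (cj c)) => P3.
  set s := [:: P1; P2; P3; d : V F m].
  psi_solve s.
- rewrite cjZ.
  rewrite ?(mulBr, mulBl, mulDr, mulDl, mulZr, mulZl, mul_er, mul_el, mulNr, mulNl).
  rewrite (ha' c).2 nrE2 mul_er altL // [cj b]cjE' [cj a]cjE'.
  rewrite ?(mulBr, mulBl, mulDr, mulDl, mulZr, mulZl, mul_er, mul_el, mulNr, mulNl).
  rewrite h2.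
  move: (mul mu gam c (mul mu gam a a)) => P1.
  move: (mul mu gam (mul mu gam b d) a) => P2.
  move: (mul mu gam d a) => P3.
  move: (mul mu gam b d) => P4.
  set s := [:: P1; P2; P3; P4; c : V F m; d : V F m].
  psi_solve s.
- rewrite ?(mulBr, mulBl, mulDr, mulDl, mulZr, mulZl, mul_er, mul_el, mulNr, mulNl).
  rewrite altL' // h2 nrE2 cjD cjZ cj_e cj_mul [cj a]cjE'.
  rewrite ?(mulBr, mulBl, mulDr, mulDl, mulZr, mulZl, mul_er, mul_el, mulNr, mulNl).
  rewrite (ha' d).2 !sqE.
  rewrite ?(mulBr, mulBl, mulDr, mulDl, mulZr, mulZl, mul_er, mul_el, mulNr, mulNl).
  move: (mul mu gam (mul mu gam b c) a) => P1.
  move: (mul mu gam b c) => P2.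
  move: (mul mu gam d a) => P3.
  set s := [:: P1; P2; P3; d : V F m].
  psi_solve s.
Qed.
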